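(* Let $d,p\ge 1$ and consider the two-layer linear model $f_1(\mathbf{x})=\mathbf{W}_1\mathbf{x}$, $f_2(\mathbf{x})=\mathbf{W}_2\mathbf{W}_1\mathbf{x}$ with $\mathbf{W}_1\in\mathbb{R}^{p\times d}$, $\mathbf{W}_2\in\mathbb{R}^{p\times p}$. Let $(\mathbf{W}_1,\mathbf{W}_2)$ be a global minimizer of $\mathcal{L}_{CL}(f_2)$ which, among all global minimizers, has the smallest value of $\|\mathbf{W}_1^\top\mathbf{W}_1\|_F^2+\|\mathbf{W}_2^\top\mathbf{W}_2\|_F^2$. Then $\mathbf{W}_1\mathbf{W}_1^\top=\mathbf{W}_2^\top\mathbf{W}_2$.
   Context: Pretraining distribution $\mathcal{D}$: a random input $\mathbf{x}\in\mathbb{R}^d$ has independent coordinates, with $x_i$ uniform on $\{-\phi_i,\phi_i\}$, $\phi_i>0$. Augmentation $\mathcal{A}(\mathbf{x})$: for each coordinate $i$ independently, with probability $\alpha_i\in[0,1]$ the sign of $x_i$ is re-randomized (replaced by an independent uniform choice of $\pm\phi_i$), otherwise $x_i$ is kept, giving $\mathbf{x}'$; then independent noise $\boldsymbol{\xi}$ with $\mathbb{E}[\boldsymbol{\xi}]=0$, $\mathbb{E}[\boldsymbol{\xi}\boldsymbol{\xi}^\top]=\sigma^2\mathbf{I}$ is added, and the augmentation is $\mathbf{x}'+\boldsymbol{\xi}$. Different draws of $\mathcal{A}$ are independent. The spectral contrastive loss of a map $f$ is $\mathcal{L}_{CL}(f)=-2\,\mathbb{E}_{\mathbf{x}\sim\mathcal{D},\,\mathbf{x}_1^+,\mathbf{x}_2^+\sim\mathcal{A}(\mathbf{x})}[f(\mathbf{x}_1^+)^\top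 f(\mathbf{x}_2^+)]+\mathbb{E}_{\mathbf{x}_1,\mathbf{x}_2\sim\mathcal{D}\text{ i.i.d.}}[(f(\mathcal{A}(\mathbf{x}_1))^\top f(\mathcal{A}(\mathbf{x}_2)))^2]$, where $\mathbf{x}_1^+,\mathbf{x}_2^+$ are two independent augmentations of the same $\mathbf{x}$. *)

(* Defs.v *)
From HB Require Import structures.
From mathcomp Require Import all_boot all_order all_algebra.
From mathcomp Require Import all_classical all_reals all_analysis.
Set Implicit Arguments. Unset Strict Implicit. Unset Printing Implicit Defensive.
Import Order.TTheory GRing.Theory Num.Theory.
Import numFieldNormedType.Exports.
Local Open Scope classical_set_scope.
Local Open Scope ring_scope.

Section Defs.
Context (R : realType) (d p : nat).

Definition signv (phi : R) (b : bool) : R := if b then phi else - phi.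

(* probability of a sign pattern s of x ~ D (uniform on {+-phi_i}) *)
Definition sweight : R := \prod_(i < d) (1 / 2).

(* An augmentation draw (before noise) is u : {ffun 'I_d -> bool * bool}:
   (u i).1 = true iff coordinate i is re-randomized (probability alpha i),
   (u i).2 is the fresh uniform sign used in that case. *)
Definition aweight (alpha : 'I_d -> R) (u : {ffun 'I_d -> bool * bool}) : R :=
  \prod_(i < d) ((if (u i).1 then alpha i else 1 - alpha i) / 2).

Definition augx (phi : 'I_d -> R) (s : {ffun 'I_d -> bool})
    (u : {ffun 'I_d -> bool * bool}) : 'cV[R]_d :=
  \col_i (if (u i).1 then signv (phi i) (u i).2 else signv (phi i) (s i)).

Definition dotp (a b : 'cV[R]_p) : R := (a^T *m b) 0 0.

(* Spectral contrastive loss.  The noise xi is a random vector on the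
   probability space (T, P); independent noise draws are realised by
   iterated integrals over independent copies of (T, P). *)
Definition LCL (dT : measure_display) (T : measurableType dT)
    (P : probability T R) (xi : T -> 'cV[R]_d)
    (phi alpha : 'I_d -> R) (f : 'cV[R]_d -> 'cV[R]_p) : R :=
  - 2 * (\sum_(s : {ffun 'I_d -> bool}) sweight *
          \sum_(u1 : {ffun 'I_d -> bool * bool}) aweight alpha u1 *
          \sum_(u2 : {ffun 'I_d -> bool * bool}) aweight alpha u2 *
          Rintegral P setT (fun w1 => Rintegral P setT (fun w2 =>
            dotp (f (augx phi s u1 + xi w1)) (f (augx phi s u2 + xi w2)))))
  + (\sum_(s1 : {ffun 'I_d -> bool}) \sum_(s2 : {ffun 'I_d -> bool})
       sweight * sweight *
       \sum_(u1 : {ffun 'I_d -> bool * bool}) aweight alpha u1 *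
       \sum_(u2 : {ffun 'I_d -> bool * bool}) aweight alpha u2 *
       Rintegral P setT (fun w1 => Rintegral P setT (fun w2 =>
         (dotp (f (augx phi s1 u1 + xi w1)) (f (augx phi s2 u2 + xi w2))) ^+ 2))).

Definition frob2 (m n : nat) (M : 'M[R]_(m, n)) : R :=
  \sum_(i < m) \sum_(j < n) (M i j) ^+ 2.

Definition f2 (W1 : 'M[R]_(p, d)) (W2 : 'M[R]_p) (x : 'cV[R]_d) : 'cV[R]_p :=
  W2 *m (W1 *m x).

End Defs.

(* Main.v *)
Require Import Defs.
From HB Require Import structures.
From mathcomp Require Import all_boot all_order all_algebra.
From mathcomp Require Import all_classical all_reals all_analysis.
Import Order.TTheory GRing.Theory Num.Theory.
Import numFieldNormedType.Exports.
Local Open Scope ring_scope.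

From mathcomp Require Import ring lra.
Set Implicit Arguments. Unset Strict Implicit.

Section Jet.
Variable R : realFieldType.

Definition jet (g : R -> R) (a b : R) :=
  exists q : {poly R}, forall t, g t = a + b * t + t ^+ 2 * q.[t].

Lemma jet_ext g h a b : (forall t, g t = h t) -> jet h a b -> jet g a b.
Proof. by move=> e [q hq]; exists q => t; rewrite e hq. Qed.

Lemma jet_cst c : jet (fun _ => c) c 0.
Proof. by exists 0 => t; rewrite horner0; ring. Qed.

Lemma jet_id : jet (fun t => t) 0 1.
Proof. by exists 0 => t; rewrite horner0; ring. Qed.

Lemma jet_add g h a b c e : jet g a b -> jet h c e ->
  jet (fun t => g t + h t) (a + c) (b + e).
Proof.
move=> [q1 h1] [q2 h2]; exists (q1 + q2) => t.
rewrite h1 h2 hornerD; ring.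
Qed.

Lemma jet_mul g h a b c e : jet g a b -> jet h c e ->
  jet (fun t => g t * h t) (a * c) (a * e + b * c).
Proof.
move=> [q1 h1] [q2 h2].
exists ((b * e)%:P + (a%:P + b%:P * 'X) * q2 + q1 * (c%:P + e%:P * 'X)
   + 'X ^+ 2 * q1 * q2) => t.
rewrite h1 h2 !(hornerD, hornerM, hornerC, hornerX, hornerXn).
ring.
Qed.

Lemma jet_sum (I : finType) (g : I -> R -> R) a b :
  (forall i, jet (g i) (a i) (b i)) ->
  jet (fun t => \sum_i g i t) (\sum_i a i) (\sum_i b i).
Proof.
move=> H.
elim: (index_enum I) => [|i s IH].
  rewrite !big_nil; apply: jet_ext (jet_cst 0) => t; by rewrite big_nil.
rewrite !big_cons; apply: jet_ext (jet_add (H i) IH) => t.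
by rewrite big_cons.
Qed.

Lemma poly_bound (q : {poly R}) : exists B, forall t, `|t| <= 1 -> `|q.[t]| <= B.
Proof.
exists (\sum_(i < size q) `|q`_i|) => t ht.
rewrite horner_coef; apply: le_trans (ler_norm_sum _ _ _) _.
apply: ler_sum => i _; rewrite normrM normrX.
by rewrite ler_piMr // exprn_ile1.
Qed.

Lemma jet_min g a b : jet g a b -> (forall t, a <= g t) -> b = 0.
Proof.
move=> [q hq] hmin.
have [B hB] := poly_bound q.
have B0 : 0 <= B by apply: le_trans (hB 0 _) => //; rewrite normr0 ler01.
have key : forall t, `|t| <= 1 -> 0 <= b * t + t ^+ 2 * q.[t].
  by move=> t _; have := hmin t; rewrite hq; lra.
case: (ltrgtP b 0) => // hb.
- set s := - b / (- b + B + 1).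
  have hs0 : 0 < s by rewrite divr_gt0 //; lra.
  have hs1 : s <= 1 by rewrite ler_pdivrMr; lra.
  have hn : `|s| <= 1 by rewrite ger0_norm // ltW.
  have k := key s hn. have k2 := hB s hn.
  have hqs := ler_norm q.[s].
  have e : s * (- b + B + 1) = - b by rewrite /s mulfVK //; lra.
  nra.
- set s := b / (b + B + 1).
  have hs0 : 0 < s by rewrite divr_gt0 //; lra.
  have hs1 : s <= 1 by rewrite ler_pdivrMr; lra.
  have hn : `|- s| <= 1 by rewrite normrN ger0_norm // ltW.
  have k := key (- s) hn. have k2 := hB (- s) hn.
  have hqs := ler_norm (q.[- s]).
  have e : s * (b + B + 1) = b by rewrite /s mulfVK //; lra.
  nra.
Qed.

End Jet.

Section JetM.
Variable R : realFieldType.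

Lemma jet_eq (g : R -> R) a b a' b' : jet g a b -> a = a' -> b = b' -> jet g a' b'.
Proof. by move=> h <- <-. Qed.

Definition jetM m n (M : R -> 'M[R]_(m, n)) (A B : 'M[R]_(m, n)) :=
  forall i j, jet (fun t => M t i j) (A i j) (B i j).

Lemma jetM_lin m n (A B : 'M[R]_(m, n)) : jetM (fun t => A + t *: B) A B.
Proof. by move=> i j; exists 0 => t; rewrite !mxE horner0; ring. Qed.

Lemma jetM_tr m n (M : R -> 'M[R]_(m, n)) A B :
  jetM M A B -> jetM (fun t => (M t)^T) A^T B^T.
Proof. by move=> h i j; rewrite !mxE; apply: jet_ext (h j i) => t; rewrite mxE. Qed.

Lemma jetM_mul m n k (M : R -> 'M[R]_(m, n)) (N : R -> 'M[R]_(n, k)) A B C D :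
  jetM M A B -> jetM N C D -> jetM (fun t => M t *m N t) (A *m C) (A *m D + B *m C).
Proof.
move=> h1 h2 i j.
apply: jet_ext; last first.
  apply: jet_eq; first by apply: (jet_sum (fun l => jet_mul (h1 i l) (h2 l j))).
    by rewrite mxE.
  by rewrite !mxE -big_split.
by move=> t; rewrite mxE.
Qed.

Lemma jet_trace n (M : R -> 'M[R]_n) A B :
  jetM M A B -> jet (fun t => \tr (M t)) (\tr A) (\tr B).
Proof.
move=> h; apply: jet_ext; last by apply: (jet_sum (fun i => h i i)).
by [].
Qed.

End JetM.

Section LA.
Variable R : realFieldType.

Lemma tr_trmul m n (A : 'M[R]_(m, n)) (B : 'M[R]_(m, n)) :
  \tr (B^T *m A) = \tr (A^T *m B).
Proof. by rewrite -mxtrace_tr trmx_mul trmxK. Qed.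

Lemma L1 n (S C : 'M[R]_n) : S^T = S ->
  \tr (S^T *m (C + C^T) + (C + C^T)^T *m S) = 4 * \tr (S *m C).
Proof.
move=> hS.
rewrite mxtraceD [\tr ((C + C^T)^T *m S)]tr_trmul hS mulmxDr mxtraceD.
have -> : \tr (S *m C^T) = \tr (S *m C).
  by rewrite -mxtrace_tr trmx_mul trmxK hS mxtrace_mulC.
ring.
Qed.

Lemma L2 n (S C : 'M[R]_n) : S^T = S ->
  \tr (S^T *m - (C + C^T) + (- (C + C^T))^T *m S) = - (4 * \tr (S *m C)).
Proof.
move=> hS; rewrite -L1 // mulmxN linearN /= mulNmx -opprD.
by rewrite linearN.
Qed.

Lemma D1 p d (W : 'M[R]_(p, d)) (E : 'M[R]_p) :
  \tr ((W^T *m W)^T *m (W^T *m (E *m W) + (E *m W)^T *m W) +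
      (W^T *m (E *m W) + (E *m W)^T *m W)^T *m (W^T *m W))
  = 4 * \tr (W *m W^T *m (W *m W^T) *m E).
Proof.
have e1 : (E *m W)^T *m W = (W^T *m (E *m W))^T by rewrite [RHS]trmx_mul trmxK.
have sS : (W^T *m W)^T = W^T *m W by rewrite trmx_mul trmxK.
rewrite e1 L1 //; congr (_ * _).
by rewrite !mulmxA mxtrace_mulC !mulmxA.
Qed.

Lemma D2 p (W : 'M[R]_p) (E : 'M[R]_p) :
  \tr ((W^T *m W)^T *m (W^T *m - (W *m E) + (- (W *m E))^T *m W) +
      (W^T *m - (W *m E) + (- (W *m E))^T *m W)^T *m (W^T *m W))
  = - (4 * \tr (W^T *m W *m (W^T *m W) *m E)).
Proof.
have e2 : W^T *m - (W *m E) + (- (W *m E))^T *m W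
          = - (W^T *m (W *m E) + (W^T *m (W *m E))^T).
  rewrite mulmxN linearN /= mulNmx opprD; congr (_ - _).
  by rewrite [RHS]trmx_mul trmxK.
have sS : (W^T *m W)^T = W^T *m W by rewrite trmx_mul trmxK.
rewrite e2 L2 //; congr (- (_ * _)).
by rewrite !mulmxA.
Qed.

Definition frobT m n (M : 'M[R]_(m, n)) := \tr (M^T *m M).

Definition GG p d (V1 : 'M[R]_(p, d)) (V2 : 'M[R]_p) :=
  frobT (V1^T *m V1) + frobT (V2^T *m V2).

Lemma first_order p d (W1 : 'M[R]_(p, d)) (W2 : 'M[R]_p)
  (Hmin : forall V1 V2, V2 *m V1 = W2 *m W1 -> GG W1 W2 <= GG V1 V2)
  (E : 'M[R]_p) (hE : E *m E = 0) :
  \tr ((W1 *m W1^T *m (W1 *m W1^T) - W2^T *m W2 *m (W2^T *m W2)) *m E) = 0.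
Proof.
pose V1 t := W1 + t *: (E *m W1).
pose V2 t := W2 + t *: (- (W2 *m E)).
have hc : forall t, V2 t *m V1 t = W2 *m W1.
  move=> t; rewrite /V1 /V2 mulmxDl !mulmxDr -!scalemxAl -!scalemxAr.
  rewrite !scalerA !mulNmx !mulmxA -(mulmxA W2 E E) hE mulmx0 mul0mx.
  by rewrite oppr0 scaler0 addr0 scalerN addrK.
have j1 : jetM V1 W1 (E *m W1) by apply: jetM_lin.
have j2 : jetM V2 W2 (- (W2 *m E)) by apply: jetM_lin.
have jM1 := jetM_mul (jetM_tr j1) j1.
have jM2 := jetM_mul (jetM_tr j2) j2.
have jF1 := jet_trace (jetM_mul (jetM_tr jM1) jM1).
have jF2 := jet_trace (jetM_mul (jetM_tr jM2) jM2).
have jG := jet_add jF1 jF2.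
have := jet_min jG (fun t => Hmin _ _ (hc t)).
rewrite D1 D2 mulmxBl mxtraceD linearN /=.
move=> h; have : 4 * (\tr (W1 *m W1^T *m (W1 *m W1^T) *m E) - \tr (W2^T *m W2 *m (W2^T *m W2) *m E)) = 0.
  by rewrite -h; ring.
by move/eqP; rewrite mulf_eq0 pnatr_eq0 /= => /eqP.
Qed.
End LA.

Section LB.
Variable R : realFieldType.

Lemma trd n (X : 'M[R]_n) i j : \tr (X *m delta_mx i j) = X j i.
Proof.
rewrite -(mul_delta_mx (0 : 'I_1)) mulmxA mxtrace_mulC mulmxA -rowE -colE.
by rewrite trace_mx11 !mxE.
Qed.

Lemma XZ n (X : 'M[R]_n) (H : forall E, E *m E = 0 -> \tr (X *m E) = 0)
  (ht : \tr X = 0) : X = 0.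
Proof.
have off : forall i j, i != j -> X i j = 0.
  move=> i j hij; rewrite -(trd X j i); apply: H.
  by rewrite mul_delta_mx_cond (negbTE hij) mulr0n.
have dg : forall i j, X i i = X j j.
  move=> i j; case: (eqVneq i j) => [-> //|hij].
  pose u : 'M[R]_(n, 1) := delta_mx i 0 + delta_mx j 0.
  pose v : 'M[R]_(1, n) := delta_mx 0 i - delta_mx 0 j.
  have hvu : v *m u = 0.
    rewrite /u /v mulmxBl !mulmxDr !mul_delta_mx_cond !eqxx (negbTE hij).
    by rewrite eq_sym (negbTE hij) !mulr0n !mulr1n addr0 add0r subrr.
  have := H (u *m v); rewrite mulmxA -(mulmxA u v u) hvu mulmx0 mul0mx => /(_ erefl).
  rewrite /u /v mulmxDl !mulmxDr !mulmxN !mul_delta_mx.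
  rewrite !mxtraceD !raddfN /= !trd (off i j hij) (off j i); last by rewrite eq_sym.
  by move=> h; lra.
apply/matrixP => i j; rewrite mxE.
case: (eqVneq i j) => [<-|hij]; last exact: off.
move: ht; rewrite /mxtrace (eq_bigr (fun _ => X i i)); last by move=> k _; rewrite (dg k i).
rewrite sumr_const card_ord => /eqP; rewrite -mulr_natr mulf_eq0 => /orP[/eqP //|].
rewrite pnatr_eq0 => /eqP n0; have h : (0 < n)%N by apply: leq_ltn_trans (ltn_ord i).
by rewrite n0 in h.
Qed.

Lemma frobT_sum m n (M : 'M[R]_(m, n)) : frobT M = \sum_i \sum_k M k i ^+ 2.
Proof.
rewrite /frobT /mxtrace; apply: eq_bigr => i _; rewrite mxE.
by apply: eq_bigr => k _; rewrite mxE expr2.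
Qed.

Lemma frobT_ge0 m n (M : 'M[R]_(m, n)) : 0 <= frobT M.
Proof. by rewrite frobT_sum; apply: sumr_ge0 => i _; apply: sumr_ge0 => k _; apply: sqr_ge0. Qed.

Lemma frobT_eq0 m n (M : 'M[R]_(m, n)) : frobT M = 0 -> M = 0.
Proof.
rewrite frobT_sum => h; apply/matrixP => k i; rewrite mxE.
have hp : forall i : 'I_n, true -> 0 <= \sum_k M k i ^+ 2.
  by move=> i' _; apply: sumr_ge0 => k' _; apply: sqr_ge0.
have := psumr_eq0P hp h (i:=i) isT.
move=> h2; have := psumr_eq0P (fun k _ => sqr_ge0 (M k i)) h2 (i:=k) isT.
by move/eqP; rewrite sqrf_eq0 => /eqP.
Qed.

Lemma balance p d (W1 : 'M[R]_(p, d)) (W2 : 'M[R]_p) :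
  W1 *m W1^T *m (W1 *m W1^T) = W2^T *m W2 *m (W2^T *m W2) ->
  W1 *m W1^T = W2^T *m W2.
Proof.
set P := W1 *m W1^T; set Q := W2^T *m W2 => hX.
set D := P - Q.
have sD : D^T = D by rewrite /D linearB /= /P /Q !trmx_mul !trmxK.
have hSD : (P + Q) *m D + D *m (P + Q) = 0.
  rewrite /D !mulmxDl !mulmxDr !mulNmx !mulmxN hX.
  by apply/matrixP => i j; rewrite !mxE; ring.
have k : \tr (D *m (P + Q) *m D) = 0.
  have : \tr (D *m ((P + Q) *m D + D *m (P + Q))) = 0 by rewrite hSD mulmx0 linear0.
  rewrite mulmxDr mxtraceD [\tr (D *m (D *m _))]mxtrace_mulC !mulmxA => h.
  have : 2 * \tr (D *m (P + Q) *m D) = 0 by rewrite -h; ring.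
  by move/eqP; rewrite mulf_eq0 pnatr_eq0 /= => /eqP.
have h0 : \tr (D *m P *m D) + \tr (D *m Q *m D) = 0.
  by rewrite -k mulmxDr mulmxDl mxtraceD.
have e1 : \tr (D *m P *m D) = frobT (W1^T *m D).
  by rewrite /frobT trmx_mul trmxK sD /P !mulmxA.
have e2 : \tr (D *m Q *m D) = frobT (W2 *m D).
  by rewrite /frobT trmx_mul sD /Q !mulmxA.
have g1 := frobT_ge0 (W1^T *m D); have g2 := frobT_ge0 (W2 *m D).
have z1 : W1^T *m D = 0 by apply: frobT_eq0; lra.
have z2 : W2 *m D = 0 by apply: frobT_eq0; lra.
have DD : D *m D = 0.
  rewrite {1}/D mulmxBl /P /Q -!mulmxA z1 z2 !mulmx0 subrr //.
apply/eqP; rewrite -subr_eq0; apply/eqP; apply: frobT_eq0.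
by rewrite /frobT sD DD linear0.
Qed.

End LB.

Section LE.
Variable R : rcfType.

Lemma scal (a b : R) : 0 <= a -> 0 <= b ->
  (forall c, 0 < c -> a + b <= c ^+ 4 * a + b / c ^+ 4) -> a = b.
Proof.
move=> ha hb H.
have Hy : forall y, 0 < y -> y * (a + b) <= y ^+ 2 * a + b.
  move=> y hy.
  pose c := Num.sqrt (Num.sqrt y).
  have c0 : 0 < c by rewrite /c !sqrtr_gt0.
  have c4 : c ^+ 4 = y.
    rewrite -[4%N]/(2 * 2)%N exprM /c !sqr_sqrtr //; (try exact: ltW); (try exact: sqrtr_ge0).
  have := H c c0; rewrite c4 => h.
  have := ler_wpM2l (ltW hy) h.
  have e : y * (y * a + b / y) = y ^+ 2 * a + b.
    by field; rewrite gt_eqF.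
  by rewrite e mulrDr.
case: (ltrgtP a b) => // hab.
- have hy : 0 < 2 * b / (a + b) by rewrite divr_gt0 //; lra.
  have := Hy _ hy.
  set y := 2 * b / (a + b).
  have ey : y * (a + b) = 2 * b by rewrite /y mulfVK //; lra.
  move=> h.
  have h1 : b <= y ^+ 2 * a by lra.
  have h3 := ler_wpM2r (sqr_ge0 (a + b)) h1.
  have e3 : y ^+ 2 * a * (a + b) ^+ 2 = (y * (a + b)) ^+ 2 * a by ring.
  rewrite e3 ey in h3.
  have : 0 < b * (b - a) ^+ 2 by apply: mulr_gt0; [lra | rewrite exprn_gt0 //; lra].
  nra.
- have ha0 : 0 < a by lra.
  have hy : 0 < (a + b) / (2 * a) by rewrite divr_gt0 //; lra.
  have := Hy _ hy.
  set y := (a + b) / (2 * a).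
  have ey : y * (2 * a) = a + b by rewrite /y mulfVK //; lra.
  move=> h.
  have h1 : a * y ^+ 2 <= b.
    have : y * (y * (2 * a)) <= y ^+ 2 * a + b by rewrite ey.
    rewrite expr2; lra.
  have h3 : (y * (2 * a)) ^+ 2 <= 4 * a * b.
    have := ler_wpM2l (ltW (mulr_gt0 (ltr0n R 4 : (0:R) < 4) ha0)) h1.
    move=> h4; apply: le_trans h4; rewrite !exprMn !expr2; lra.
  rewrite ey in h3.
  have : 0 < (a - b) ^+ 2 by rewrite exprn_gt0 //; lra.
  nra.
Qed.

Lemma gramZ m n k (W : 'M[R]_(m, n)) : (k *: W)^T *m (k *: W) = k ^+ 2 *: (W^T *m W).
Proof.
have -> : (k *: W)^T = k *: W^T by apply/matrixP => i j; rewrite !mxE.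
by rewrite -scalemxAl -scalemxAr scalerA expr2.
Qed.

Lemma frobTZ m n k (M : 'M[R]_(m, n)) : frobT (k *: M) = k ^+ 2 * frobT M.
Proof. by rewrite /frobT gramZ mxtraceZ. Qed.

Lemma main_LA p d (W1 : 'M[R]_(p, d)) (W2 : 'M[R]_p)
  (Hmin : forall V1 V2, V2 *m V1 = W2 *m W1 -> GG W1 W2 <= GG V1 V2) :
  W1 *m W1^T = W2^T *m W2.
Proof.
apply: balance; apply/eqP; rewrite -subr_eq0; apply/eqP.
apply: XZ; first exact: first_order.
have t1 : \tr (W1 *m W1^T *m (W1 *m W1^T)) = frobT (W1^T *m W1).
  by rewrite /frobT trmx_mul trmxK !mulmxA mxtrace_mulC !mulmxA.
have t2 : \tr (W2^T *m W2 *m (W2^T *m W2)) = frobT (W2^T *m W2).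
  by rewrite /frobT trmx_mul trmxK !mulmxA.
rewrite mxtraceD raddfN /= t1 t2; apply/eqP; rewrite subr_eq0; apply/eqP.
apply: scal; try exact: frobT_ge0.
move=> c c0.
have := Hmin (c *: W1) (c^-1 *: W2).
rewrite -scalemxAl -scalemxAr scalerA mulVf ?gt_eqF // scale1r => /(_ erefl).
rewrite /GG !gramZ !frobTZ /GG.
have -> : (c ^+ 2) ^+ 2 = c ^+ 4 by rewrite -exprM.
have -> : (c^-1 ^+ 2) ^+ 2 = (c ^+ 4)^-1 by rewrite -exprM exprVn.
by rewrite [_^-1 * _]mulrC.
Qed.

End LE.


Lemma frob2E (R : realType) m n (M : 'M[R]_(m, n)) : frob2 M = frobT M.
Proof.
rewrite frobT_sum /frob2 exchange_big /=.
by apply: eq_bigr => i _; apply: eq_bigr => j _.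
Qed.

Unset Implicit Arguments.
Local Open Scope classical_set_scope.

Theorem theorem3p3 (R : realType) (d p : nat) (hd : (0 < d)%N) (hp : (0 < p)%N)
  (phi alpha : 'I_d -> R)
  (hphi : forall i, 0 < phi i)
  (halpha : forall i, 0 <= alpha i <= 1)
  (sigma : R)
  (dT : measure_display) (T : measurableType dT) (P : probability T R)
  (xi : T -> 'cV[R]_d)
  (hxi_meas : forall i, measurable_fun setT (fun w => xi w i 0))
  (hxi_L2 : forall i, P.-integrable setT (fun w => ((xi w i 0) ^+ 2)%:E))
  (hxi_mean : forall i, (\int[P]_w (xi w i 0)%:E = 0)%E)
  (hxi_cov : forall i j,
      (\int[P]_w (xi w i 0 * xi w j 0)%:E = (if i == j then sigma ^+ 2 else 0)%:E)%E)
  (W1 : 'M[R]_(p, d)) (W2 : 'M[R]_p)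
  (hmin : forall (V1 : 'M[R]_(p, d)) (V2 : 'M[R]_p),
      LCL P xi phi alpha (f2 W1 W2) <= LCL P xi phi alpha (f2 V1 V2))
  (hnorm : forall (V1 : 'M[R]_(p, d)) (V2 : 'M[R]_p),
      (forall (U1 : 'M[R]_(p, d)) (U2 : 'M[R]_p),
          LCL P xi phi alpha (f2 V1 V2) <= LCL P xi phi alpha (f2 U1 U2)) ->
      frob2 (W1^T *m W1) + frob2 (W2^T *m W2) <= frob2 (V1^T *m V1) + frob2 (V2^T *m V2)) :
  W1 *m W1^T = W2^T *m W2.

Proof.
apply: main_LA => V1 V2 hV.
have ef : f2 V1 V2 = f2 W1 W2.
  by apply: funext => x; rewrite /f2 !mulmxA hV.
have := hnorm V1 V2; rewrite ef => /(_ (hmin)).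
by rewrite /GG !frob2E.
Qed.
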